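(* For $m\ge0$ let $p_m(x)=1+\sum_{i=1}^m (ix)^i$. Then $p_m$ has no real root if $m$ is even and exactly one real root (counted with multiplicity) if $m$ is odd. *)

(* Defs.v *)
From mathcomp Require Import all_boot all_order all_algebra.
From mathcomp Require Import reals.
Set Implicit Arguments. Unset Strict Implicit. Unset Printing Implicit Defensive.
Import GRing.Theory Num.Theory.
Local Open Scope ring_scope.

Definition pm (R : realType) (m : nat) : {poly R} :=
  1 + \sum_(1 <= i < m.+1) (i%:R *: 'X) ^+ i.

(* Main.v *)
Require Import Defs.
From mathcomp Require Import all_boot all_order all_algebra.
From mathcomp Require Import reals.
From mathcomp Require Import polyrcf polyorder.
From mathcomp Require Import zify ring lra.
Import Order.TTheory GRing.Theory Num.Theory.
Set Implicit Arguments. Unset Strict Implicit.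
Local Open Scope ring_scope.

Section NatPart.
Local Open Scope nat_scope.
Lemma bern (M k : nat) : M ^ k * (M - k) <= (M - 1) ^ k * M.
Proof.
elim: k => [|k IH]; first by rewrite !expn0 subn0.
rewrite !expnS.
have H1 : M * M ^ k * (M - k.+1) <= (M - 1) * (M ^ k * (M - k)).
  set X := M ^ k. nia.
apply: (leq_trans H1). rewrite -mulnA. by apply: leq_mul.
Qed.

Lemma logconv_nat n : (n.+1) ^ (n.+1).*2 <= n ^ n * n.+2 ^ n.+2.
Proof.
case: n => [|n]; first by [].
have B := bern (n.+2 ^ 2) n.+2.
have E1 : n.+2 ^ 2 - 1 = n.+1 * n.+3 by rewrite !expnS expn0; lia.
have E2 : n.+2 ^ 2 - n.+2 = n.+1 * n.+2 by rewrite !expnS expn0; lia.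
rewrite E1 E2 -expnM expnMn in B.
rewrite -mul2n [n.+3 ^ _]expnS.
move: B; rewrite [n.+1 ^ n.+2]expnS.
set A := n.+2 ^ _; set P := n.+1 ^ n.+1; set Q := n.+3 ^ n.+2.
move=> B.
have B2 : A * n.+2 * n.+1 <= (P * Q * n.+2) * n.+2 * n.+1.
  move: B; rewrite !expnS expn0 => B. apply: (leq_trans _ (leq_trans B _)); apply: eq_leq; ring.
rewrite !leq_pmul2r // in B2.
apply: (leq_trans B2). rewrite -mulnA [n.+3 * Q]mulnC. apply: leq_mul => //. by apply: leq_mul.
Qed.
End NatPart.

Section A.
Set Implicit Arguments.
Variable R : realType.
Definition aa (t : R) (i : nat) := (i%:R * t) ^+ i.

Lemma aa_pos t i : 0 < t -> 0 < aa t i.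
Proof.
move=> t0; rewrite /aa; case: i => [|i]; first by rewrite expr0.
by apply: exprn_gt0; apply: mulr_gt0 => //; rewrite ltr0n.
Qed.

Lemma aa_logconv t i : 0 <= t -> aa t i.+1 ^+ 2 <= aa t i * aa t i.+2.
Proof.
move=> t0; rewrite /aa [X in X ^+ 2]exprMn [X in _ <= X * _]exprMn [X in _ <= _ * X]exprMn.
have E1 : (i.+1%:R ^+ i.+1 * t ^+ i.+1) ^+ 2 =
   ((i.+1 ^ (i.+1).*2)%N%:R : R) * t ^+ (i.+1).*2.
  by rewrite exprMn -!exprM natrX -mul2n mulnC.
have E2 : i%:R ^+ i * t ^+ i * (i.+2%:R ^+ i.+2 * t ^+ i.+2) =
   ((i ^ i * i.+2 ^ i.+2)%N%:R : R) * t ^+ (i.+1).*2.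
  have -> : t ^+ (i.+1).*2 = t ^+ i * t ^+ i.+2 by rewrite -exprD; congr (_ ^+ _); lia.
  rewrite natrM !natrX; ring.
rewrite E1 E2; apply: ler_wpM2r; first by apply: exprn_ge0.
by rewrite ler_nat logconv_nat.
Qed.

Lemma aa_grow t i : 0 < t -> aa t i <= aa t i.+1 -> aa t i.+1 <= aa t i.+2.
Proof.
move=> t0 h; have L := @aa_logconv t i (ltW t0); have P := @aa_pos t i t0.
move: L h P; rewrite expr2; set x := aa t i; set y := aa t i.+1; set z := aa t i.+2.
move=> L h P; nra.
Qed.

Lemma unimodal t N : 0 < t -> exists k, [/\ (k <= N)%N,
  (forall i, (i < k)%N -> aa t i.+1 <= aa t i) &
  (forall i, (k <= i)%N -> (i < N)%N -> aa t i <= aa t i.+1)].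
Proof.
move=> t0; elim: N => [|N [k [kN h1 h2]]].
  by exists 0%N; split => // i; rewrite ltn0.
have [kltN|kgeN] := ltnP k N.
  exists k; split; [lia| exact: h1|] => i ki iN.
  have [iN'|iN'] := ltnP i N; first exact: h2.
  have -> : i = N by lia.
  have hN : aa t N.-1 <= aa t N.-1.+1 by apply: h2; lia.
  have := @aa_grow t N.-1 t0 hN; rewrite prednK //; lia.
have kE : k = N by lia.
have [h|h] := leP (aa t N) (aa t N.+1).
  exists k; split; [lia| exact: h1|] => i ki iN.
  have [iN'|iN'] := ltnP i N; first exact: h2.
  by have -> : i = N by lia.
exists N.+1; split => // [i iN|i iN iN']; last by lia.
have [iN'|iN'] := ltnP i k; first exact: h1.
have -> : i = N by lia.
exact: ltW.
Qed.

Lemma pair_sum (F : nat -> R) L :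
  \sum_(i < L.*2) F i = \sum_(j < L) (F j.*2 + F j.*2.+1).
Proof.
elim: L => [|L IH]; first by rewrite !big_ord0.
by rewrite doubleS !big_ord_recr /= IH addrA.
Qed.


Lemma odd_key t L : 0 < t -> (0 < L)%N -> exists c : nat,
  \sum_(i < L.*2) (i%:R - c%:R) * ((-1) ^+ i * aa t i) < 0.
Proof.
move=> t0 L0; have [k [kN h1 h2]] := @unimodal t (L.*2).-1 t0.
exists (k./2).*2.
rewrite (pair_sum (fun i : nat => (i%:R - ((k./2).*2)%:R) * ((-1) ^+ i * aa t i))).
rewrite [X in _ < X](_ : _ = \sum_(j < L) (0:R)); last by rewrite big1_eq.
apply: ltr_sum.
  by apply/hasP; exists (Ordinal L0); rewrite ?mem_index_enum.
move=> [j jL] _ /=.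
rewrite -[(-1) ^+ (j.*2).+1]signr_odd -[(-1) ^+ j.*2]signr_odd /= odd_double /=.
rewrite expr0 expr1 !mul1r mulN1r -natr1.
have a0 := @aa_pos t j.*2 t0; have a1 := @aa_pos t (j.*2).+1 t0.
set x := (j.*2)%:R; set c := ((k./2).*2)%:R.
have [jl|jl] := ltnP j k./2.
  have A : aa t (j.*2).+1 <= aa t j.*2 by apply: h1; lia.
  have : (j.*2 + 2)%:R <= c :> R by rewrite ler_nat; lia.
  rewrite natrD -/x => hc; nra.
have [ej|jl'] := eqVneq j k./2.
  have -> : c = x by rewrite /c /x ej.
  nra.
have A : aa t j.*2 <= aa t (j.*2).+1 by apply: h2; lia.
have : c + 2 <= x :> R by rewrite -natrD ler_nat; lia.
move=> hc; nra.
Qed.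

Lemma even_key t L : 0 < t ->
  0 < \sum_(i < (L.*2).+1) (-1) ^+ i * aa t i.
Proof.
move=> t0; have [k [kN h1 h2]] := @unimodal t L.*2 t0.
set l := k.+1./2.
set b := fun j => aa t (maxn j l).*2.
rewrite big_ord_recr /= (pair_sum (fun i : nat => (-1) ^+ i * aa t i)).
have S : \sum_(j < L) (b j - b j.+1) <=
   \sum_(j < L) ((-1) ^+ j.*2 * aa t j.*2 + (-1) ^+ (j.*2).+1 * aa t (j.*2).+1).
  apply: ler_sum => -[j jL] _ /=.
  rewrite -[(-1) ^+ (j.*2).+1]signr_odd -[(-1) ^+ j.*2]signr_odd /= odd_double /=.
  rewrite expr0 expr1 !mul1r mulN1r /b.
  have [jl|jl] := ltnP j l.
    have E1 : maxn j l = l by lia.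
    rewrite ?E1.
    have E2 : maxn j.+1 l = l by lia.
    rewrite ?E2.
    have A : aa t (j.*2).+1 <= aa t j.*2 by apply: h1; lia.
    rewrite subrr subr_ge0 //.
  have E3 : maxn j l = j by lia.
    rewrite ?E3.
  have E4 : maxn j.+1 l = j.+1 by lia.
    rewrite ?E4.
  have A : aa t (j.*2).+1 <= aa t (j.*2).+2 by apply: h2; lia.
  rewrite doubleS; lra.
have T : \sum_(j < L) (b j - b j.+1) = b 0%N - b L.
  clear S; elim: (L) => [|n IH]; first by rewrite big_ord0 subrr.
  by rewrite big_ord_recr /= IH; ring.
rewrite T in S.
have bL : b L = aa t L.*2 by rewrite /b; congr aa; congr double; lia.
have b0 : 0 < b 0%N by apply: aa_pos.
rewrite -signr_odd odd_double expr0 mul1r.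
rewrite bL in S; lra.
Qed.

End A.
Lemma pm_horner (R : realType) m (x : R) :
  (pm R m).[x] = \sum_(i < m.+1) (i%:R * x) ^+ i.
Proof.
rewrite /pm hornerD hornerC horner_sum big_ord_recl /= expr0.
rewrite big_add1 /= big_mkord; congr (_ + _); apply: eq_bigr => i _.
by rewrite horner_exp hornerZ hornerX.
Qed.

Lemma pm_deriv (R : realType) m (x : R) :
  x * (pm R m)^`().[x] = \sum_(i < m.+1) i%:R * (i%:R * x) ^+ i.
Proof.
rewrite /pm derivD derivC add0r raddf_sum horner_sum mulr_sumr.
rewrite big_ord_recl /= mul0r add0r.
rewrite big_add1 /= big_mkord; apply: eq_bigr => i _.
have -> : bump 0 i = i.+1 by [].
rewrite exprZn derivZ derivXn hornerZ hornerMn hornerXn /=.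
rewrite exprMn [x ^+ i.+1]exprS -mulr_natr; ring.
Qed.
Section U.
Variable R : rcfType.
Implicit Types p : {poly R}.

Lemma mu_mup p x : p != 0 -> \mu_x p = mup x p.
Proof.
move=> p0; apply/eqP; rewrite eqn_leq mup_geq // root_mu /=.
by rewrite -root_le_mu // -mup_geq.
Qed.

Lemma mu_simple p x : root p x -> p^`().[x] != 0 -> \mu_x p = 1%N.
Proof.
move=> rx dx.
have p0 : p != 0 by apply: contraNneq dx => ->; rewrite derivC horner0.
have h1 := mu_deriv rx.
have h2 : \mu_x p^`() = 0%N by apply: muNroot.
have h3 : (0 < \mu_x p)%N by rewrite mu_gt0.
rewrite h2 in h1; move: h1 h3; case: (\mu_x p) => [|[|n]] //.
Qed.

Lemma sgp_right_simple p x : root p x -> 0 < p^`().[x] -> sgp_right p x = 1.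
Proof.
move=> rx dx; rewrite sgp_right_deriv // sgp_rightNroot ?gtr0_sg //.
by rewrite rootE gt_eqF.
Qed.

Lemma two_roots p r1 r2 : r1 < r2 -> root p r1 -> root p r2 ->
  (forall r, root p r -> 0 < p^`().[r]) -> False.
Proof.
move=> r12 h1 h2 hd.
have p0 : p != 0.
  by apply: contraTneq (hd _ h1) => ->; rewrite derivC horner0 ltxx.
have [y [ry1 hy hno]] : exists y, [/\ r1 < y, root p y & {in `]r1, y[, forall u, ~~ root p u}].
  case: (next_rootP p r1 r2) => [p00|y _ py0 hyi hno|c _ _ hno].
  - by rewrite p00 eqxx in p0.
  - by exists y; split => //; [rewrite (itvP hyi) | apply/rootP].
  - by exists r2.
have ny : next_root p r1 y = y.
  case: (next_rootP p r1 y) => [p00|y' _ py0 hyi _|c _ -> _].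
  - by rewrite p00 eqxx in p0.
  - by move: (hno _ hyi); rewrite rootE py0 eqxx.
  - by rewrite max_l // ltW.
set z := (r1 + y) / 2.
have zi : z \in `]r1, y[ by apply: mid_in_itv.
have sz : Num.sg p.[z] = 1.
  rewrite (@sgr_neighpr R y p r1 z); first by apply: sgp_right_simple => //; exact: hd.
  by rewrite /neighpr ny.
have zy : z < y by rewrite (itvP zi).
have [w wi] := neighpl_wit zy p0.
have sw : Num.sg p.[w] = -1.
  rewrite (@sgr_neighpl R z p y w wi) mu_simple ?sgp_right_simple //.
    by rewrite expr1 mulr1.
    exact: hd.
  by rewrite gt_eqF // hd.
have wi' : w \in `]r1, y[.
  move: wi; rewrite /neighpl in_itv /= => /andP[pw wy].
  have := prev_root_in p z y; rewrite in_itv /= => /andP[hz _].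
  have rz : r1 < z by rewrite (itvP zi).
  rewrite in_itv /= wy andbT; apply: (lt_trans rz).
  apply: le_lt_trans pw; apply: le_trans hz; by rewrite min_l // ltW.
have := polyrN0_itv hno zi wi'; rewrite sz sw => /eqP.
move=> /eqP; lra.
Qed.
End U.

Lemma nat_exp_le (a b e : nat) : (a <= b)%N -> (a ^ e <= b ^ e)%N.
Proof. move=> ab; elim: e => [|e IH]; rewrite ?expn0 // !expnS; exact: leq_mul. Qed.

Lemma aa2_inc (R : realType) i : @aa R 2 i <= @aa R 2 i.+1.
Proof.
rewrite /aa -!natrM -!natrX ler_nat.
apply: (@leq_trans ((i.+1 * 2) ^ i)); first by apply: nat_exp_le; lia.
by rewrite expnS leq_pmull // muln_gt0.
Qed.

Lemma neg_term (R : realType) (t : R) (i : nat) :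
  (i%:R * - t) ^+ i = (-1) ^+ i * @aa R t i.
Proof. by rewrite mulrN exprNn. Qed.

Lemma pm_pos (R : realType) m (x : R) : 0 <= x -> 0 < (pm R m).[x].
Proof.
move=> x0; rewrite pm_horner big_ord_recl /= expr0.
apply: (@lt_le_trans _ _ 1) => //; rewrite lerDl.
by apply: sumr_ge0 => i _; apply: exprn_ge0; apply: mulr_ge0.
Qed.

Theorem theorem8p4 (R : realType) (m : nat) :
  (~~ odd m -> forall x : R, ~~ root (pm R m) x) /\
  (odd m -> exists x : R,
      [/\ root (pm R m) x, mup x (pm R m) = 1%N &
          forall y : R, root (pm R m) y -> y = x]).
Proof.
split.
  move=> hm x; rewrite rootE; apply/negP => /eqP px.
  have [x0|x0] := leP 0 x; first by move: (pm_pos m x0); rewrite px ltxx.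
  have mE : m = (m./2).*2 by rewrite -[in LHS](odd_double_half m) (negbTE hm).
  have := @even_key R (- x) (m./2); rewrite oppr_gt0 => /(_ x0).
  rewrite -mE; under eq_bigr => i _ do rewrite -neg_term opprK.
  by rewrite -pm_horner px ltxx.
move=> hm.
set L := m.+1./2.
have mE : L.*2 = m.+1.
  by rewrite /L -[in RHS](odd_double_half m.+1) /= hm.
have L0 : (0 < L)%N by rewrite /L; lia.
set P := pm R m.
have P0 : P != 0.
  apply/negP => /eqP P0; have := @pm_pos R m 0 (lexx _).
  by rewrite -/P P0 horner0 ltxx.
have rneg : forall r, root P r -> r < 0.
  move=> r; rewrite rootE => /eqP pr; rewrite ltNge; apply/negP => r0.
  by move: (pm_pos m r0); rewrite -/P pr ltxx.
have hd : forall r, root P r -> 0 < P^`().[r].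
  move=> r rr; have rn := rneg r rr.
  have rp : 0 < - r by rewrite oppr_gt0.
  have [c hc] := odd_key rp L0.
  move: hc; rewrite mE.
  under eq_bigr => i _ do rewrite -neg_term opprK.
  rewrite (eq_bigr (fun i : 'I_m.+1 => i%:R * (i%:R * r) ^+ i - c%:R * (i%:R * r) ^+ i));
    last by move=> i _; rewrite mulrBl.
  rewrite sumrB -mulr_sumr -pm_horner -pm_deriv -/P.
  move: rr; rewrite rootE => /eqP ->; rewrite mulr0 subr0 => h.
  nra.
have [x0 /andP[x0a x0b] rx0] : exists2 x, -2 <= x <= 0 & root P x.
  apply: poly_ivt; first by lra.
  apply/andP; split; last by apply: ltW; apply: pm_pos.
  rewrite /P pm_horner -mE.
  under eq_bigr => i _ do rewrite neg_term.
  rewrite (pair_sum (fun i : nat => (-1) ^+ i * @aa R 2 i)).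
  apply: sumr_le0 => j _.
  rewrite -[(-1) ^+ (j.*2).+1]signr_odd -[(-1) ^+ j.*2]signr_odd /= odd_double /=.
  rewrite expr0 expr1 !mul1r mulN1r subr_le0; exact: aa2_inc.
exists x0; split => //.
  rewrite -mu_mup // mu_simple //; exact/lt0r_neq0/hd.
move=> y ry; apply/eqP; case: (ltgtP y x0) => // [yx|xy].
  by case: (two_roots yx ry rx0 hd).
by case: (two_roots xy rx0 ry hd).
Qed.
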